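(* Let $L,M$ be distributive lattices and $T:L\to M$ a surjective lattice homomorphism. Then the induced Banach lattice homomorphism $\overline T:\mathrm{FBL}\langle L\rangle\to\mathrm{FBL}\langle M\rangle$, i.e. the unique Banach lattice homomorphism with $\overline T(\delta_x)=\delta_{Tx}$ for all $x\in L$, is surjective.
   Context: For a distributive lattice $L$, $L^*$ is the set of all lattice homomorphisms $x^*:L\to[-1,1]$; for $x\in L$, $\delta_x:L^*\to\mathbb R$ is $\delta_x(x^* )=x^*(x)$. A function $f:L^*\to\mathbb R$ is positively homogeneous if $f(\lambda x^* )=\lambda f(x^* )$ whenever $\lambda\ge0$ and $\lambda x^*\in L^*$; for such $f$, $\|f\|=\sup\{\sum_{i=1}^m|f(x_i^* )|: m\in\mathbb N,\ x_i^*\in L^*,\ \sup_{x\in L}\sum_{i=1}^m|x_i^*(x)|\le1\}$. $\mathrm{FBL}\langle L\rangle$ is the norm closure of the vector sublattice generated by $\{\delta_x:x\in L\}$ inside the Banach lattice of positively homogeneous functions on $L^*$ with finite norm, with pointwise order and operations. It satisfies the universal property: for every Banach lattice $X$ and bounded lattice homomorphism $S:L\to X$ there is a unique Banach lattice homomorphism $\widehat S:\mathrm{FBL}\langle L\rangle\to X$ with $\widehat S(\delta_x)=S(x)$ and $\|\widehat S\|=\sup_{x\in L}\|Sx\|$. *)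

(* Defs.v *)
From HB Require Import structures.
From mathcomp Require Import all_boot all_order all_algebra.
From mathcomp Require Import reals.
Set Implicit Arguments. Unset Strict Implicit. Unset Printing Implicit Defensive.
Import Order.TTheory GRing.Theory Num.Theory.
Local Open Scope ring_scope.

Definition lattice_hom (d1 d2 : Order.disp_t) (L : distrLatticeType d1)
  (M : distrLatticeType d2) (T : L -> M) : Prop :=
  forall x y, T (Order.meet x y) = Order.meet (T x) (T y) /\
              T (Order.join x y) = Order.join (T x) (T y).

Record dual (R : realType) (d : Order.disp_t) (L : distrLatticeType d) := Dual {
  dfun : L -> R;
  dfun_hom : forall x y, dfun (Order.meet x y) = Num.min (dfun x) (dfun y) /\
                         dfun (Order.join x y) = Num.max (dfun x) (dfun y);
  dfun_bnd : forall x, -1 <= dfun x <= 1 }.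

Section FBL.
Variables (R : realType) (d : Order.disp_t) (L : distrLatticeType d).


Definition delta (x : L) : dual R L -> R := fun xs => dfun xs x.

Definition pos_hom (f : dual R L -> R) : Prop :=
  forall (xs ys : dual R L) (lam : R), 0 <= lam ->
    (forall x, dfun ys x = lam * dfun xs x) -> f ys = lam * f xs.

Definition norm_le (f : dual R L -> R) (c : R) : Prop :=
  forall (m : nat) (xs : 'I_m -> dual R L),
    (forall x : L, \sum_(i < m) `|dfun (xs i) x| <= 1) ->
    \sum_(i < m) `|f (xs i)| <= c.

Inductive gen_vl : (dual R L -> R) -> Prop :=
| gen_delta x : gen_vl (delta x)
| gen_add f g : gen_vl f -> gen_vl g -> gen_vl (fun xs => f xs + g xs)
| gen_scale (c : R) f : gen_vl f -> gen_vl (fun xs => c * f xs)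
| gen_max f g : gen_vl f -> gen_vl g -> gen_vl (fun xs => Num.max (f xs) (g xs)).

Definition FBL (f : dual R L -> R) : Prop :=
  pos_hom f /\ (exists c, norm_le f c) /\
  forall eps : R, 0 < eps ->
    exists g, gen_vl g /\ norm_le (fun xs => f xs - g xs) eps.

End FBL.

Definition induced_BL_hom (R : realType) (d1 d2 : Order.disp_t)
  (L : distrLatticeType d1) (M : distrLatticeType d2) (T : L -> M)
  (Phi : (dual R L -> R) -> (dual R M -> R)) : Prop :=
  (forall f, FBL f -> FBL (Phi f)) /\
  (forall f g, FBL f -> FBL g ->
     Phi (fun xs => f xs + g xs) = (fun ys => Phi f ys + Phi g ys)) /\
  (forall (c : R) f, FBL f -> Phi (fun xs => c * f xs) = (fun ys => c * Phi f ys)) /\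
  (forall f g, FBL f -> FBL g ->
     Phi (fun xs => Num.max (f xs) (g xs)) = (fun ys => Num.max (Phi f ys) (Phi g ys))) /\
  (exists C : R, forall f c, FBL f -> norm_le f c -> norm_le (Phi f) (C * c)) /\
  (forall x : L, Phi (delta x) = delta (T x)).

(* Main.v *)
Require Import Defs.
From HB Require Import structures.
From mathcomp Require Import all_boot all_order all_algebra.
From mathcomp Require Import classical_sets reals ring lra.
From Stdlib Require Import ClassicalEpsilon FunctionalExtensionality.
Import Order.TTheory GRing.Theory Num.Theory.
Local Open Scope ring_scope.
Set Implicit Arguments. Unset Strict Implicit.

Section Expr.
Variable R : realType.

Inductive expr (A : Type) :=
| EVar : A -> expr A
| EAdd : expr A -> expr A -> expr A
| EScale : R -> expr A -> expr A
| EMax : expr A -> expr A -> expr A.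

Arguments EVar {A}.
Arguments EAdd {A}.
Arguments EScale {A}.
Arguments EMax {A}.

Fixpoint eval {A} (v : A -> R) (e : expr A) : R :=
  match e with
  | EVar a => v a
  | EAdd e1 e2 => eval v e1 + eval v e2
  | EScale c e1 => c * eval v e1
  | EMax e1 e2 => Num.max (eval v e1) (eval v e2)
  end.

Fixpoint occurs {A} (a : A) (e : expr A) : Prop :=
  match e with
  | EVar b => a = b
  | EAdd e1 e2 => occurs a e1 \/ occurs a e2
  | EScale _ e1 => occurs a e1
  | EMax e1 e2 => occurs a e1 \/ occurs a e2
  end.

Fixpoint emap {A B} (s : A -> B) (e : expr A) : expr B :=
  match e with
  | EVar a => EVar (s a)
  | EAdd e1 e2 => EAdd (emap s e1) (emap s e2)
  | EScale c e1 => EScale c (emap s e1)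
  | EMax e1 e2 => EMax (emap s e1) (emap s e2)
  end.

Fixpoint avar {A} (e : expr A) : expr A :=
  match e with
  | EVar a => EMax (EVar a) (EScale (-1) (EVar a))
  | EAdd e1 e2 => EMax (avar e1) (avar e2)
  | EScale _ e1 => avar e1
  | EMax e1 e2 => EMax (avar e1) (avar e2)
  end.

Lemma eval_map A B (s : A -> B) (v : B -> R) e :
  eval v (emap s e) = eval (fun a => v (s a)) e.
Proof. elim: e => /= [a|e1 IH1 e2 IH2|c e1 IH|e1 IH1 e2 IH2]; by rewrite ?IH1 ?IH2 ?IH. Qed.

Lemma avar_map A B (s : A -> B) e : avar (emap s e) = emap s (avar e).
Proof. elim: e => /= [a|e1 IH1 e2 IH2|c e1 IH|e1 IH1 e2 IH2]; by rewrite ?IH1 ?IH2 ?IH. Qed.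

Lemma eval_ext A (v w : A -> R) e :
  (forall a, occurs a e -> v a = w a) -> eval v e = eval w e.
Proof.
elim: e => /= [a H|e1 IH1 e2 IH2 H|c e1 IH H|e1 IH1 e2 IH2 H].
- exact: H.
- rewrite IH1 ?IH2 //; move=> a Ha; apply: H; [right|left]; exact: Ha.
- by rewrite IH.
- rewrite IH1 ?IH2 //; move=> a Ha; apply: H; [right|left]; exact: Ha.
Qed.

Lemma eval_hom A (v : A -> R) (c : R) e : 0 <= c ->
  eval (fun a => c * v a) e = c * eval v e.
Proof.
move=> c0; elim: e => /= [a|e1 IH1 e2 IH2|k e1 IH|e1 IH1 e2 IH2] //.
- by rewrite IH1 IH2 mulrDr.
- by rewrite IH mulrCA.
- by rewrite IH1 IH2 maxr_pMr.
Qed.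

Lemma norm_max (x : R) : `|x| = Num.max x (-1 * x).
Proof.
rewrite mulN1r; case: (lerP 0 x) => h.
- by rewrite ger0_norm // max_l // (le_trans _ h) // oppr_le0.
- by rewrite ltr0_norm // max_r // ltW // (lt_trans h) // oppr_gt0.
Qed.

Lemma avar_ge A (v : A -> R) a e : occurs a e -> `|v a| <= eval v (avar e).
Proof.
elim: e => /= [b ->|e1 IH1 e2 IH2|c e1 IH|e1 IH1 e2 IH2].
- by rewrite norm_max.
- by case=> h; rewrite le_max; [rewrite (IH1 h) | rewrite (IH2 h) orbT].
- exact: IH.
- by case=> h; rewrite le_max; [rewrite (IH1 h) | rewrite (IH2 h) orbT].
Qed.

Lemma avar_ge0 A (v : A -> R) e : 0 <= eval v (avar e).
Proof.
elim: e => /= [b|e1 IH1 e2 IH2|c e1 IH|e1 IH1 e2 IH2] //.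
- by rewrite -norm_max.
- by rewrite le_max IH1.
- by rewrite le_max IH1.
Qed.

Lemma avar_le A (v : A -> R) e C :
  (forall a, occurs a e -> `|v a| <= C) -> eval v (avar e) <= C.
Proof.
elim: e => /= [b H|e1 IH1 e2 IH2 H|c e1 IH H|e1 IH1 e2 IH2 H].
- by rewrite -norm_max; apply: H.
- rewrite ge_max IH1 ?IH2 //; move=> a Ha; apply: H; [right|left]; exact: Ha.
- exact: IH.
- rewrite ge_max IH1 ?IH2 //; move=> a Ha; apply: H; [right|left]; exact: Ha.
Qed.

End Expr.
Arguments EVar {R A}.
Arguments EAdd {R A}.
Arguments EScale {R A}.
Arguments EMax {R A}.
Arguments eval {R A}.
Arguments occurs {R A}.
Arguments emap {R A B}.
Arguments avar {R A}.

Section DualLemmas.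
Variables (R : realType) (d : Order.disp_t) (L : distrLatticeType d).
Implicit Types (xs ys : dual R L) (h f : dual R L -> R).

Lemma dual_mono xs (x y : L) : (x <= y)%O -> dfun xs x <= dfun xs y.
Proof.
move=> xy; have [_ E] := dfun_hom xs x y.
by rewrite (join_r xy) in E; rewrite E le_max lexx.
Qed.

Lemma dual_bnd xs (x : L) : `|dfun xs x| <= 1.
Proof. by rewrite ler_norml; apply: dfun_bnd. Qed.

Lemma gen_of_expr (e : expr R L) : gen_vl (fun xs : dual R L => eval (dfun xs) e).
Proof.
elim: e => /= [a|e1 IH1 e2 IH2|c e1 IH|e1 IH1 e2 IH2].
- exact: gen_delta.
- exact: (gen_add IH1 IH2).
- exact: (gen_scale c IH).
- exact: (gen_max IH1 IH2).
Qed.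

Lemma expr_of_gen h : gen_vl h -> exists e : expr R L, forall xs, h xs = eval (dfun xs) e.
Proof.
elim=> [x|f g _ [e1 H1] _ [e2 H2]|c f _ [e1 H1]|f g _ [e1 H1] _ [e2 H2]].
- by exists (EVar x).
- by exists (EAdd e1 e2) => xs /=; rewrite H1 H2.
- by exists (EScale c e1) => xs /=; rewrite H1.
- by exists (EMax e1 e2) => xs /=; rewrite H1 H2.
Qed.

Lemma gen_pos_hom h : gen_vl h -> pos_hom h.
Proof.
move=> gh xs ys lam l0 H; have [e He] := expr_of_gen gh.
rewrite !He -eval_hom //; apply: eval_ext => a _; exact: H.
Qed.

Lemma gen_bounded h : gen_vl h -> exists B, 0 <= B /\ forall xs, `|h xs| <= B.
Proof.
elim=> [x|f g _ [B1 [B10 H1]] _ [B2 [B20 H2]]|c f _ [B1 [B10 H1]]|f g _ [B1 [B10 H1]] _ [B2 [B20 H2]]].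
- by exists 1; split => // xs; apply: dual_bnd.
- exists (B1 + B2); split; first exact: addr_ge0.
  by move=> xs; apply: (le_trans (ler_normD _ _)); apply: lerD.
- exists (`|c| * B1); split; first exact: mulr_ge0.
  by move=> xs; rewrite normrM; apply: ler_wpM2l.
- exists (B1 + B2); split; first exact: addr_ge0.
  move=> xs; case: (lerP (f xs) (g xs)) => _.
  + by apply: (le_trans (H2 xs)); rewrite lerDr.
  + by apply: (le_trans (H1 xs)); rewrite lerDl.
Qed.

Definition clampf (t r : R) : R := Num.max (-1) (Num.min 1 (r / t)).

Lemma clampf_mono t r s : 0 < t -> r <= s -> clampf t r <= clampf t s.
Proof.
move=> t0 rs; rewrite /clampf ge_max le_max lexx /=.
rewrite le_max; apply/orP; right; rewrite le_min ge_min lexx /=.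
rewrite ge_min; apply/orP; right; by rewrite ler_pM2r ?invr_gt0.
Qed.

Lemma mono_min (phi : R -> R) a b : (forall r s, r <= s -> phi r <= phi s) ->
  phi (Num.min a b) = Num.min (phi a) (phi b) /\ phi (Num.max a b) = Num.max (phi a) (phi b).
Proof.
move=> m; case: (lerP a b) => ab.
- by rewrite (min_l (m _ _ ab)) (max_r (m _ _ ab)).
- by rewrite (min_r (m _ _ (ltW ab))) (max_l (m _ _ (ltW ab))).
Qed.

Lemma clamp_hom xs t : 0 < t -> forall x y : L,
  clampf t (dfun xs (Order.meet x y)) = Num.min (clampf t (dfun xs x)) (clampf t (dfun xs y)) /\
  clampf t (dfun xs (Order.join x y)) = Num.max (clampf t (dfun xs x)) (clampf t (dfun xs y)).
Proof.
move=> t0 x y; have [-> ->] := dfun_hom xs x y.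
exact: (mono_min _ _ (fun r s => clampf_mono t0)).
Qed.

Lemma clamp_bnd t r : -1 <= clampf t r <= 1.
Proof.
rewrite /clampf le_max lexx /= ge_max ge_min lexx /=.
by rewrite (le_trans (lerN10 R)) ?ler01.
Qed.

Definition clampd xs t (t0 : 0 < t) : dual R L :=
  @Dual R d L (fun x => clampf t (dfun xs x)) (clamp_hom xs t0) (fun x => clamp_bnd t _).

Lemma clamp_bound h (e : expr R L) eps :
  (forall xs, h xs = eval (dfun xs) e) -> (forall xs, `|h xs| <= eps) ->
  forall xs, `|h xs| <= eps * eval (dfun xs) (avar e).
Proof.
move=> He Hb xs; set t := eval (dfun xs) (avar e).
have t0 : 0 <= t by apply: avar_ge0.
have occ a : occurs a e -> `|dfun xs a| <= t by apply: avar_ge.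
have eps0 : 0 <= eps by apply: le_trans (Hb xs); apply: normr_ge0.
case: (ltrP 0 t) => tpos; last first.
  have t00 : t = 0 by apply/eqP; rewrite eq_le tpos t0.
  rewrite He (eval_ext (w := fun a => 0 * dfun xs a)).
    by rewrite eval_hom // mul0r normr0 t00 mulr0.
  move=> a Ha; rewrite mul0r; apply/eqP; rewrite -normr_le0 -t00; exact: occ.
have E : eval (dfun xs) e = t * eval (dfun (clampd xs tpos)) e.
  rewrite -eval_hom //; apply: eval_ext => a Ha /=.
  have := occ a Ha; rewrite ler_norml => /andP[l1 l2].
  have q1 : -1 <= dfun xs a / t by rewrite ler_pdivlMr // mulN1r.
  have q2 : dfun xs a / t <= 1 by rewrite ler_pdivrMr // mul1r.
  rewrite /clampf (min_r q2) (max_r q1).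
  by rewrite mulrCA divff ?mulr1 // gt_eqF.
rewrite He E normrM (gtr0_norm tpos) mulrC ler_pM2r //; rewrite -He; exact: Hb.
Qed.

Lemma norm_le_pt h c : norm_le h c -> forall xs, `|h xs| <= c.
Proof.
move=> H xs; have := H 1%N (fun _ => xs).
rewrite big_ord1; apply => x; rewrite big_ord1; exact: dual_bnd.
Qed.

Lemma norm_le_ext h h' c : (forall xs, h xs = h' xs) -> norm_le h' c -> norm_le h c.
Proof.
move=> E H m xs Hx; under eq_bigr do rewrite E; exact: H.
Qed.

Lemma norm_le_mono h c c' : c <= c' -> norm_le h c -> norm_le h c'.
Proof. by move=> cc H m xs Hx; apply: le_trans (H m xs Hx) cc. Qed.

Lemma norm_le_add h1 h2 c1 c2 : norm_le h1 c1 -> norm_le h2 c2 ->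
  norm_le (fun xs => h1 xs + h2 xs) (c1 + c2).
Proof.
move=> H1 H2 m xs Hx; apply: le_trans (_ : \sum_(i < m) (`|h1 (xs i)| + `|h2 (xs i)|) <= _).
  by apply: ler_sum => i _; apply: ler_normD.
by rewrite big_split /=; apply: lerD; [apply: H1|apply: H2].
Qed.

Fixpoint jn (e : expr R L) : L :=
  match e with
  | EVar a => a
  | EAdd e1 e2 => Order.join (jn e1) (jn e2)
  | EScale _ e1 => jn e1
  | EMax e1 e2 => Order.join (jn e1) (jn e2)
  end.

Fixpoint mt (e : expr R L) : L :=
  match e with
  | EVar a => a
  | EAdd e1 e2 => Order.meet (mt e1) (mt e2)
  | EScale _ e1 => mt e1
  | EMax e1 e2 => Order.meet (mt e1) (mt e2)
  end.

Lemma jn_mt a e : occurs a e -> (mt e <= a)%O && (a <= jn e)%O.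
Proof.
elim: e => /= [b ->|e1 IH1 e2 IH2|c e1 IH|e1 IH1 e2 IH2]; rewrite ?lexx //.
- case=> /[dup] h; [move/IH1|move/IH2] => /andP[h1 h2].
  + by rewrite (le_trans (leIl _ _) h1) (le_trans h2 (leUl _ _)).
  + by rewrite (le_trans (leIr _ _) h1) (le_trans h2 (leUr _ _)).
- case=> /[dup] h; [move/IH1|move/IH2] => /andP[h1 h2].
  + by rewrite (le_trans (leIl _ _) h1) (le_trans h2 (leUl _ _)).
  + by rewrite (le_trans (leIr _ _) h1) (le_trans h2 (leUr _ _)).
Qed.

Lemma gen_norm h eps : gen_vl h -> 0 <= eps -> (forall xs, `|h xs| <= eps) ->
  norm_le h (eps + eps).
Proof.
move=> gh eps0 Hb; have [e He] := expr_of_gen gh.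
have cb := clamp_bound He Hb.
have pt xs : `|h xs| <= eps * (`|dfun xs (jn e)| + `|dfun xs (mt e)|).
  apply: le_trans (cb xs) _; apply: ler_wpM2l => //; apply: avar_le => a Ha.
  have /andP[h1 h2] := jn_mt Ha.
  have m1 := dual_mono xs h1; have m2 := dual_mono xs h2.
  rewrite ler_norml; apply/andP; split.
  - rewrite opprD; apply: le_trans m1.
    have := lexx `|dfun xs (mt e)|; rewrite ler_norml => /andP[+ _].
    apply: le_trans; by rewrite gerDr oppr_le0.
  - apply: le_trans m2 _; apply: le_trans (ler_norm _) _; by rewrite lerDl.
move=> m xs Hx.
apply: le_trans (_ : \sum_(i < m) eps * (`|dfun (xs i) (jn e)| + `|dfun (xs i) (mt e)|) <= _).
  by apply: ler_sum => i _; apply: pt.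
rewrite -mulr_sumr big_split /=.
apply: le_trans (_ : eps * (1 + 1) <= _); last by rewrite mulrDr mulr1.
by apply: ler_wpM2l => //; apply: lerD; exact: Hx.
Qed.

Lemma gen_FBL h : gen_vl h -> FBL h.
Proof.
move=> gh; split; first exact: gen_pos_hom.
split.
  have [B [B0 HB]] := gen_bounded gh; exists (B + B); exact: gen_norm.
move=> eps e0; exists h; split => // m xs _.
by rewrite big1 ?ltW // => i _; rewrite subrr normr0.
Qed.

End DualLemmas.

Section Clip.
Variable R : realType.
Definition clip (a B : R) := Num.max (- Num.max (- a) (- B)) (- B).

Lemma clip_id a B : `|a| <= B -> clip a B = a.
Proof.
rewrite ler_norml => /andP[h1 h2].
have h3 : - B <= - a by rewrite lerN2.
by rewrite /clip (max_l h3) opprK max_l.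
Qed.

Lemma clip_bnd a B : 0 <= B -> `|clip a B| <= B.
Proof.
move=> B0; rewrite /clip; case: (lerP (- a) (- B)) => h.
- by rewrite opprK max_l ?ger0_norm // ?(le_trans _ B0) // oppr_le0.
- rewrite opprK ler_norml; apply/andP; split.
    by rewrite le_max lexx orbT.
  rewrite ge_max; apply/andP; split; first by rewrite -lerN2 ltW.
  by rewrite (le_trans _ B0) // oppr_le0.
Qed.
End Clip.

Section Two.
Variables (R : realType) (d1 d2 : Order.disp_t) (L : distrLatticeType d1)
  (M : distrLatticeType d2) (T : L -> M) (HT : lattice_hom T).

Lemma Tstar_hom (ys : dual R M) : forall x y : L,
  dfun ys (T (Order.meet x y)) = Num.min (dfun ys (T x)) (dfun ys (T y)) /\
  dfun ys (T (Order.join x y)) = Num.max (dfun ys (T x)) (dfun ys (T y)).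
Proof. move=> x y; have [-> ->] := HT x y; exact: dfun_hom. Qed.

Definition Tstar (ys : dual R M) : dual R L :=
  @Dual R d1 L (fun x => dfun ys (T x)) (Tstar_hom ys) (fun x => dfun_bnd ys (T x)).

Lemma lift (sel : M -> L) (Hsel : forall y, T (sel y) = y) h eps :
  gen_vl h -> 0 <= eps -> (forall ys, `|h ys| <= eps) ->
  exists k : dual R L -> R, gen_vl k /\ (forall ys, k (Tstar ys) = h ys) /\
    forall xs, `|k xs| <= eps.
Proof.
move=> gh eps0 Hb; have [e He] := expr_of_gen gh.
pose e' := emap sel e; pose u := avar e'.
pose ke := EMax (EScale (-1) (EMax (EScale (-1) e') (EScale (-1) (EScale eps u))))
                (EScale (-1) (EScale eps u)).
have Eke v : eval v ke = clip (eval v e') (eps * eval v u).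
  by rewrite /= !mulN1r.
exists (fun xs => eval (dfun xs) ke); split; first exact: gen_of_expr.
split.
- move=> ys; rewrite Eke.
  have Ev (e0 : expr R M) : eval (dfun (Tstar ys)) (emap sel e0) = eval (dfun ys) e0.
    by rewrite eval_map; apply: eval_ext => a _ /=; rewrite Hsel.
  rewrite /u /e' avar_map !Ev -He clip_id //.
  exact: (clamp_bound He Hb).
- move=> xs; rewrite Eke; apply: le_trans (clip_bnd _ _) _.
    by apply: mulr_ge0 => //; apply: avar_ge0.
  rewrite -[X in _ <= X]mulr1; apply: ler_wpM2l => //.
  by apply: avar_le => a _; apply: dual_bnd.
Qed.

Lemma gen_comp f : gen_vl f -> gen_vl (fun ys : dual R M => f (Tstar ys)).
Proof.
elim=> [x|f1 g _ IH1 _ IH2|c f1 _ IH|f1 g _ IH1 _ IH2].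
- change (gen_vl (@delta R _ M (T x))); exact: gen_delta.
- exact: (gen_add IH1 IH2).
- exact: (gen_scale c IH).
- exact: (gen_max IH1 IH2).
Qed.

Lemma norm_comp f c : norm_le f c -> norm_le (fun ys : dual R M => f (Tstar ys)) c.
Proof. move=> H m ys Hy; apply: (H m (fun i => Tstar (ys i))) => x /=; exact: Hy. Qed.

Lemma FBL_comp f : FBL f -> FBL (fun ys : dual R M => f (Tstar ys)).
Proof.
move=> [ph [[c Hc] ap]]; split.
  move=> xs ys lam l0 H; apply: ph => // x /=; exact: H.
split; first by exists c; apply: norm_comp.
move=> eps e0; have [g [gg Hg]] := ap eps e0.
exists (fun ys => g (Tstar ys)); split; first exact: gen_comp.
exact: (norm_comp Hg).
Qed.

Lemma Phi0_ok : induced_BL_hom T (fun f ys => f (Tstar ys)).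
Proof.
split; first exact: FBL_comp.
do 3 (split; first by []).
split; last by [].
by exists 1 => f c _ H; rewrite mul1r; apply: norm_comp.
Qed.

Lemma Phi_gen Phi : induced_BL_hom T Phi -> forall f, gen_vl f ->
  Phi f = (fun ys => f (Tstar ys)).
Proof.
move=> [_ [Hadd [Hsc [Hmax [_ Hdel]]]]] f; elim.
- move=> x; by rewrite Hdel.
- move=> f1 g g1 IH1 g2 IH2.
  by rewrite (Hadd _ _ (gen_FBL g1) (gen_FBL g2)) IH1 IH2.
- move=> c f1 g1 IH; by rewrite (Hsc _ _ (gen_FBL g1)) IH.
- move=> f1 g g1 IH1 g2 IH2.
  by rewrite (Hmax _ _ (gen_FBL g1) (gen_FBL g2)) IH1 IH2.
Qed.

End Two.

Section FBLadd.
Variables (R : realType) (d : Order.disp_t) (L : distrLatticeType d).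

Lemma FBL_add (f1 f2 : dual R L -> R) : FBL f1 -> FBL f2 -> FBL (fun xs => f1 xs + f2 xs).
Proof.
move=> [p1 [[c1 H1] a1]] [p2 [[c2 H2] a2]]; split.
  move=> xs ys lam l0 H; by rewrite (p1 xs ys lam l0 H) (p2 xs ys lam l0 H) mulrDr.
split; first by exists (c1 + c2); apply: norm_le_add.
move=> eps e0; have e20 : 0 < eps / 2 by rewrite divr_gt0.
have [g1 [gg1 Hg1]] := a1 _ e20; have [g2 [gg2 Hg2]] := a2 _ e20.
exists (fun xs => g1 xs + g2 xs); split; first exact: gen_add.
rewrite [eps]splitr; apply: norm_le_ext (norm_le_add Hg1 Hg2) => xs.
by rewrite opprD addrACA.
Qed.
End FBLadd.

Definition e (R : realType) (n : nat) : R := ((2 : R) ^+ n)^-1.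

Section ELemmas.
Variable R : realType.

Lemma e_gt0 n : 0 < e R n.
Proof. by rewrite /e invr_gt0 exprn_gt0. Qed.

Lemma e_S n : e R n.+1 + e R n.+1 = e R n.
Proof. by rewrite /e exprSr invfM -splitr. Qed.

Lemma e_anti n m : (n <= m)%N -> e R m <= e R n.
Proof.
move=> nm; rewrite -(subnKC nm); elim: (m - n)%N => [|j IH]; first by rewrite addn0.
rewrite addnS; apply: le_trans IH; have := e_S (n + j); have := e_gt0 (n + j).+1; lra.
Qed.

Lemma e_small (eps : R) N : 0 < eps -> exists m, (N <= m)%N /\ e R m < eps.
Proof.
move=> e0; exists (maxn N (Num.Def.archi_bound eps^-1)); split; first exact: leq_maxl.
have := upper_nthrootP (leq_maxr N (Num.Def.archi_bound eps^-1)).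
set i := maxn _ _ => H.
rewrite /e -[((2 : R) ^+ i)^-1]mul1r ltr_pdivrMr ?exprn_gt0 //.
by rewrite -ltr_pdivrMl // mulr1.
Qed.

Lemma small (X Y C : R) N : 0 <= C -> (forall m, (N <= m)%N -> X <= Y + C * e R m) -> X <= Y.
Proof.
move=> C0 H; rewrite leNgt; apply/negP => XY.
have p : 0 < (X - Y) / (C + 1) by rewrite divr_gt0 ?subr_gt0 // ltr_wpDl.
have [m [Nm em]] := e_small N p.
have C1 : 0 < C + 1 by rewrite ltr_wpDl.
rewrite ltr_pdivlMr // in em.
have := H m Nm; have := e_gt0 m; lra.
Qed.
End ELemmas.

Section Main.
Variables (R : realType) (d1 d2 : Order.disp_t) (L : distrLatticeType d1)
  (M : distrLatticeType d2) (T : L -> M) (HT : lattice_hom T).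
Variables (g : dual R M -> R) (G : nat -> dual R M -> R) (k0 : dual R L -> R)
  (k : nat -> dual R L -> R).
Hypotheses (HGe : forall n ys, `|g ys - G n ys| <= e R n)
  (Hk0 : gen_vl k0) (Hk0T : forall ys, k0 (Tstar HT ys) = G 0 ys)
  (Hk : forall n, gen_vl (k n))
  (HkT : forall n ys, k n (Tstar HT ys) = G n.+1 ys - G n ys)
  (Hkb : forall n xs, `|k n xs| <= e R n + e R n).

Fixpoint s (n : nat) : dual R L -> R :=
  match n with
  | 0 => k0
  | n'.+1 => fun xs => s n' xs + k n' xs
  end.

Lemma gen_s n : gen_vl (s n).
Proof. elim: n => [|n IH] //=; exact: gen_add. Qed.

Lemma sT n ys : s n (Tstar HT ys) = G n ys.
Proof. elim: n => [|n IH] //=; by rewrite IH HkT addrC subrK. Qed.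

Definition a n xs := s n xs - 4 * e R n.
Definition b n xs := s n xs + 4 * e R n.

Lemma a_step n xs : a n xs <= a n.+1 xs.
Proof.
rewrite /a /=; have := Hkb n xs; rewrite ler_norml => /andP[h1 h2].
have := e_S R n; lra.
Qed.

Lemma b_step n xs : b n.+1 xs <= b n xs.
Proof.
rewrite /b /=; have := Hkb n xs; rewrite ler_norml => /andP[h1 h2].
have := e_S R n; lra.
Qed.

Lemma a_mono n m xs : (n <= m)%N -> a n xs <= a m xs.
Proof.
move=> nm; rewrite -(subnKC nm); elim: (m - n)%N => [|j IH]; first by rewrite addn0.
by rewrite addnS; apply: le_trans IH (a_step _ _).
Qed.

Lemma b_mono n m xs : (n <= m)%N -> b m xs <= b n xs.
Proof.
move=> nm; rewrite -(subnKC nm); elim: (m - n)%N => [|j IH]; first by rewrite addn0.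
by rewrite addnS; apply: le_trans (b_step _ _) IH.
Qed.

Lemma a_le_b n xs : a n xs <= b n xs.
Proof. rewrite /a /b; have := e_gt0 R n; lra. Qed.

Lemma a_le_b' n N xs : a n xs <= b N xs.
Proof.
case: (leqP n N) => h.
- exact: le_trans (a_mono xs h) (a_le_b N xs).
- exact: le_trans (a_le_b n xs) (b_mono xs (ltnW h)).
Qed.

Definition f xs := sup [set r | exists n, r = a n xs].

Lemma f_bnd N xs : a N xs <= f xs <= b N xs.
Proof.
have hs : has_sup [set r | exists n, r = a n xs].
  split; first by exists (a 0 xs); exists 0%N.
  by exists (b 0 xs) => r [n ->]; apply: a_le_b'.
apply/andP; split.
- by apply: sup_upper_bound => //; exists N.
- by apply: ge_sup; [case: hs|move=> r [n ->]; apply: a_le_b'].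
Qed.

Lemma f_close N xs : `|f xs + -1 * s N xs| <= 4 * e R N + 4 * e R N.
Proof.
have /andP[h1 h2] := f_bnd N xs; rewrite /a /b in h1 h2.
rewrite ler_norml; have := e_gt0 R N; lra.
Qed.

Lemma s_close N m xs : (N <= m)%N -> `|s m xs + -1 * s N xs| <= 4 * e R N + 4 * e R N.
Proof.
move=> Nm; have h1 := a_mono xs Nm; have h2 := b_mono xs Nm.
have h3 := a_le_b m xs; rewrite /a /b in h1 h2 h3.
rewrite ler_norml; have := e_gt0 R N; have := e_gt0 R m; lra.
Qed.

Lemma f_approx N : norm_le (fun xs => f xs + -1 * s N xs) (8 * e R N + 8 * e R N).
Proof.
move=> p xs Hx; apply: (small (C := p%:R * (4 + 4)) (N := N)).
  by apply: mulr_ge0; [exact: ler0n|lra].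
move=> m Nm.
have gsm : gen_vl (fun xs => s m xs + -1 * s N xs).
  by apply: gen_add; [exact: gen_s|apply: gen_scale; exact: gen_s].
have e0 : 0 <= 4 * e R N + 4 * e R N by have := e_gt0 R N; lra.
have nsm := gen_norm gsm e0 (fun xs => s_close xs Nm).
have := nsm p xs Hx.
have : \sum_(i < p) `|f (xs i) + -1 * s m (xs i)| <= p%:R * (4 * e R m + 4 * e R m).
  apply: le_trans (_ : \sum_(i < p) (4 * e R m + 4 * e R m) <= _).
    by apply: ler_sum => i _; exact: f_close.
  by rewrite sumr_const card_ord [X in _ <= X]mulr_natl.
have : \sum_(i < p) `|f (xs i) + -1 * s N (xs i)| <=
   \sum_(i < p) `|f (xs i) + -1 * s m (xs i)| + \sum_(i < p) `|s m (xs i) + -1 * s N (xs i)|.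
  rewrite -big_split /=; apply: ler_sum => i _.
  have -> : f (xs i) + -1 * s N (xs i) =
     (f (xs i) + -1 * s m (xs i)) + (s m (xs i) + -1 * s N (xs i)) by ring.
  exact: ler_normD.
lra.
Qed.

Lemma FBL_f : FBL f.
Proof.
split.
  move=> xs ys lam l0 H; have ph := fun N => gen_pos_hom (gen_s N) l0 H.
  apply/eqP; rewrite -subr_eq0 -normr_le0.
  apply: (small (C := 8 + 8 * lam) (N := 0%N)); first by lra.
  move=> m _; have := ph m; have h1 := f_close m ys; have h2 := f_close m xs.
  rewrite ler_norml in h1; rewrite ler_norml in h2.
  case/andP: h1 => h1 h1'; case/andP: h2 => h2 h2'.
  have h3 := ler_wpM2l l0 h2; have h4 := ler_wpM2l l0 h2'.
  rewrite ler_norml; lra.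
split.
  have [B [B0 HB]] := gen_bounded Hk0.
  exists ((8 * e R 0 + 8 * e R 0) + (B + B)).
  apply: norm_le_ext (norm_le_add (f_approx 0) (gen_norm Hk0 B0 HB)) => xs /=.
  by ring.
move=> eps e0; have ep : 0 < eps / 16 by rewrite divr_gt0.
have [m [_ em]] := e_small 0%N ep.
exists (s m); split; first exact: gen_s.
apply: norm_le_mono (_ : 8 * e R m + 8 * e R m <= eps) _.
  rewrite ltr_pdivlMr // in em; lra.
apply: norm_le_ext (f_approx m) => xs; by ring.
Qed.

Lemma Phi_f Phi : induced_BL_hom T Phi -> Phi f = g.
Proof.
move=> spec; have [_ [Hadd [_ [_ [[C HC] _]]]]] := spec.
apply: functional_extensionality => ys.
have Ff := FBL_f.
apply/eqP; rewrite -subr_eq0 -normr_le0.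
apply: (small (C := `|C| * 16 + 1) (N := 0%N)); first by have := normr_ge0 C; lra.
move=> N _.
have gs : gen_vl (fun xs => -1 * s N xs) by apply: gen_scale; exact: gen_s.
have E : Phi (fun xs => f xs + -1 * s N xs) =
   (fun ys => Phi f ys + Phi (fun xs => -1 * s N xs) ys) := Hadd f _ Ff (gen_FBL gs).
rewrite (Phi_gen HT spec gs) in E.
have FB : FBL (fun xs => f xs + -1 * s N xs) := FBL_add Ff (gen_FBL gs).
have H1 := norm_le_pt (HC _ _ FB (f_approx N)) ys.
rewrite E /= sT in H1.
have H2 := HGe N ys.
have H3 : C * (8 * e R N + 8 * e R N) <= `|C| * (8 * e R N + 8 * e R N).
  by apply: ler_wpM2r; [have := e_gt0 R N; lra | exact: ler_norm].
rewrite ler_norml in H1; rewrite ler_norml in H2; rewrite ler_norml.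
case/andP: H1 => H1 H1'; case/andP: H2 => H2 H2'.
lra.
Qed.

End Main.

Unset Implicit Arguments.

Theorem mainTheorem16 (R : realType) (d1 d2 : Order.disp_t)
  (L : distrLatticeType d1) (M : distrLatticeType d2) (T : L -> M) :
  lattice_hom T -> (forall y : M, exists x : L, T x = y) ->
  (exists Phi : (dual R L -> R) -> (dual R M -> R), induced_BL_hom T Phi) /\
  (forall Phi : (dual R L -> R) -> (dual R M -> R), induced_BL_hom T Phi ->
     forall g : dual R M -> R, FBL g -> exists f : dual R L -> R, FBL f /\ Phi f = g).
Proof.
move=> HT Hsurj; split; first by exists (fun f ys => f (Tstar HT ys)); exact: Phi0_ok.
move=> Phi spec g [_ [_ Hap]].
have sel_ex : forall y, {x : L | T x = y} :=
  fun y => constructive_indefinite_description _ (Hsurj y).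
pose sel y := proj1_sig (sel_ex y).
have Hsel y : T (sel y) = y := proj2_sig (sel_ex y).
have Gex : forall n, {h : dual R M -> R | gen_vl h /\ norm_le (fun xs => g xs - h xs) (e R n)} :=
  fun n => constructive_indefinite_description _ (Hap _ (e_gt0 R n)).
pose G n := proj1_sig (Gex n).
have HG n : gen_vl (G n) := (proj2_sig (Gex n)).1.
have HGe n ys : `|g ys - G n ys| <= e R n := norm_le_pt (proj2_sig (Gex n)).2 ys.
have [B [B0 HB]] := gen_bounded (HG 0%N).
have [k0 [Hk0 [Hk0T _]]] := lift HT Hsel (HG 0%N) B0 HB.
have kex : forall n, {kk : dual R L -> R | gen_vl kk /\
    (forall ys, kk (Tstar HT ys) = G n.+1 ys - G n ys) /\
    forall xs, `|kk xs| <= e R n + e R n}.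
  move=> n; apply: constructive_indefinite_description.
  have gd : gen_vl (fun ys => G n.+1 ys + -1 * G n ys).
    by apply: gen_add; [exact: HG|apply: gen_scale; exact: HG].
  have e0 : 0 <= e R n + e R n by have := e_gt0 R n; lra.
  have hb ys : `|G n.+1 ys + -1 * G n ys| <= e R n + e R n.
    have := HGe n ys; have := HGe n.+1 ys; rewrite !ler_norml.
    move=> /andP[h1 h2] /andP[h3 h4]; have := e_S R n; have := e_gt0 R n.+1; lra.
  have [kk [g1 [g2 g3]]] := lift HT Hsel gd e0 hb.
  by exists kk; split => //; split => // ys; rewrite g2 mulN1r.
pose k n := proj1_sig (kex n).
have Hk n : gen_vl (k n) := (proj2_sig (kex n)).1.
have HkT n ys : k n (Tstar HT ys) = G n.+1 ys - G n ys := (proj2_sig (kex n)).2.1 ys.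
have Hkb n xs : `|k n xs| <= e R n + e R n := (proj2_sig (kex n)).2.2 xs.
exists (f k0 k); split.
- exact: (FBL_f Hk0 Hk Hkb).
- by apply: (Phi_f (HT := HT)).
Qed.
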